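(* Let $S,T$ be numerical semigroups, $w$ a positive integer and $f$ a polynomial with nonnegative integer coefficients such that $\mathrm H_S(x^w)f(x)=\mathrm H_T(x)$. Let $u$ be the greatest common divisor of the exponents of the monomials occurring in $f$ with nonzero coefficient. If $u\in S$, then there exists a numerical semigroup $U$ such that $T$ is the gluing $T=uU+_{uw}wS$, that is, $T=uU+wS$ and $uw\in uU\cap wS$.
   Context: A numerical semigroup is a submonoid of $(\mathbb N,+)$ with finite complement in $\mathbb N$; $aA=\{ax:x\in A\}$ and $A+B=\{x+y:x\in A,y\in B\}$. $\mathrm H_S(x)=\sum_{s\in S}x^s$. For submonoids $T_1,T_2$ of $\mathbb N$ with $d_i=\gcd(T_i)$, a submonoid $T$ is the gluing $T=T_1+_dT_2$, $d=\mathrm{lcm}(d_1,d_2)$, if $T=T_1+T_2$ and $\mathrm{lcm}(d_1,d_2)\in T_1\cap T_2$. *)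

(* Defs.v *)
From mathcomp Require Import all_boot all_order all_algebra.
Set Implicit Arguments. Unset Strict Implicit. Unset Printing Implicit Defensive.
Import GRing.Theory Num.Theory.

Definition numerical_semigroup (S : pred nat) : Prop :=
  [/\ S 0, (forall a b, S a -> S b -> S (a + b)) & exists N, forall n, N <= n -> S n].

Definition scale_set (a : nat) (A : pred nat) : nat -> Prop :=
  fun n => exists2 x, A x & n = a * x.

Definition sum_set (A B : nat -> Prop) : nat -> Prop :=
  fun n => exists x y, [/\ A x, B y & n = x + y].

Definition fps := nat -> int.

Definition hilbert (S : pred nat) : fps := fun n => Posz (S n : nat).

Definition subst_pow (w : nat) (a : fps) : fps :=
  fun n => if w %| n then a (n %/ w) else 0%R.

Definition poly_mul_fps (f : {poly int}) (a : fps) : fps :=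
  fun n => (\sum_(k < n.+1) f`_k * a (n - k)%N)%R.

Definition exponent_gcd (f : {poly int}) : nat :=
  \big[gcdn/0%N]_(i < size f | (f`_i != 0)%R) (i : nat).

(* Main.v *)
Require Import Defs.
From mathcomp Require Import all_boot all_order all_algebra.
Import Order.TTheory GRing.Theory Num.Theory.
Section Aux.
Local Open Scope ring_scope.
Variables (S T : pred nat) (w : nat) (f : {poly int}).
Hypothesis fge0 : forall i, (0 <= f`_i).
Hypothesis H : forall n, poly_mul_fps f (subst_pow w (hilbert S)) n = hilbert T n.

Definition term n (k : 'I_n.+1) := f`_k * subst_pow w (hilbert S) (n - k)%N.

Lemma term_ge0 n k : 0 <= term n k.
Proof. apply: mulr_ge0 => //; rewrite /subst_pow /hilbert; by case: ifP. Qed.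

Lemma term_pos n (k : 'I_n.+1) : 0 < term n k -> T n.
Proof.
move=> Hk; have := H n; rewrite /poly_mul_fps (bigD1 k) //= => E.
have : 0 < hilbert T n.
  rewrite -E; apply: (lt_le_trans Hk); rewrite lerDl.
  by apply: sumr_ge0 => i _; apply: term_ge0.
by rewrite /hilbert; case: (T n).
Qed.

Lemma term_ex n : T n -> exists k : 'I_n.+1, term n k != 0.
Proof.
move=> Tn; case: (pickP (fun k : 'I_n.+1 => term n k != 0)) => [k Hk | Hn].
  by exists k.
have := H n; rewrite /poly_mul_fps big1 /hilbert ?Tn // => i _.
by apply/eqP; rewrite -[_ == _]negbK; have := Hn i; rewrite /term => ->.
Qed.
End Aux.

Theorem theorem7 (S T : pred nat) (w : nat) (f : {poly int}) :
  numerical_semigroup S -> numerical_semigroup T ->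
  0 < w ->
  (forall i, (0 <= f`_i)%R) ->
  (forall n, poly_mul_fps f (subst_pow w (hilbert S)) n = hilbert T n) ->
  S (exponent_gcd f) ->
  exists U : pred nat,
    [/\ numerical_semigroup U,
        (forall n, T n <-> sum_set (scale_set (exponent_gcd f) U) (scale_set w S) n),
        scale_set (exponent_gcd f) U (exponent_gcd f * w)
      & scale_set w S (exponent_gcd f * w)].
Proof.
move=> [S0 Sadd [NS HNS]] [T0 Tadd [NT HNT]] w0 fge0 H Su.
set u := exponent_gcd f.
(* f_0 = 1 *)
have f0 : (f`_0 != 0)%R.
  have := H 0%N; rewrite /poly_mul_fps big_ord1 /subst_pow dvdn0 div0n /hilbert S0 T0.
  by rewrite mulr1 => ->.
have TwS : forall s, S s -> T (w * s)%N.
  move=> s Ss; pose k : 'I_(w * s).+1 := ord0.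
  apply: (@term_pos S T w f fge0 H _ k).
  rewrite /term /= subn0 /subst_pow dvdn_mulr // mulKn // /hilbert Ss mulr1.
  by rewrite lt_def f0 fge0.
have TA : forall k, (f`_k != 0)%R -> T k.
  move=> k fk; pose j : 'I_k.+1 := ord_max.
  apply: (@term_pos S T w f fge0 H _ j).
  rewrite /term /= subnn /subst_pow dvdn0 div0n /hilbert S0 mulr1.
  by rewrite lt_def fk fge0.
have udiv : forall k, (f`_k != 0)%R -> (u %| k)%N.
  move=> k fk; have ks : (k < size f)%N.
    by rewrite ltnNge; apply/negP => /leq_sizeP Hs; move: fk; rewrite Hs // eqxx.
  rewrite /u /exponent_gcd.
  by apply: (biggcdn_inf (Ordinal ks)) => //=.
exists (fun m => T (u * m)%N); split.
- split; first by rewrite muln0.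
  + by move=> a b Ta Tb; rewrite mulnDr; apply: Tadd.
  + case: (posnP u) => [u0 | upos].
      by exists 0%N => n _; rewrite u0 mul0n.
    exists NT => n Hn; apply: HNT; apply: (leq_trans Hn).
    by rewrite leq_pmull.
- move=> n; split.
  + move=> Tn; have [k Hk] := @term_ex S T w f H n Tn.
    move: Hk; rewrite /term /subst_pow /hilbert.
    case: ifP => [wd|]; last by rewrite mulr0 eqxx.
    case Ss: (S _); last by rewrite mulr0 eqxx.
    case: (eqVneq (f`_k)%R 0%R) => [->|fk]; first by rewrite mul0r eqxx.
    move=> _; exists (u * (k %/ u))%N, (w * ((n - k) %/ w))%N; split.
    * by exists (k %/ u)%N => //=; rewrite [(u * _)%N]mulnC divnK ?udiv // TA.
    * by exists ((n - k) %/ w)%N.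
    * rewrite [(u * _)%N]mulnC divnK ?udiv // [(w * _)%N]mulnC divnK //.
      by rewrite addnC subnK // -ltnS ltn_ord.
  + move=> [x [y [[a Ua ->] [b Sb ->] ->]]].
    by apply: Tadd => //; apply: TwS.
- by exists w => //; rewrite /= mulnC; apply: TwS.
- by exists u => //; rewrite mulnC.
Qed.
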